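(* Let $\phi$ be a cocycle with respect to $\theta$ on $\mathbb{R}^+\times\Sigma\times X$ having a bounded pullback absorbing set $\{B_\sigma\}_{\sigma\in\Sigma}$ (not necessarily nested). Assume that for every $\varepsilon>0$ and every $\sigma\in\Sigma$ there exist $T=T(\sigma,\varepsilon)\ge0$ and a function $\psi_{T,\sigma}\in\mathrm{Contr}(B_{\theta_{-T}(\sigma)})$ such that $$\|\phi(T,\theta_{-T}(\sigma);x)-\phi(T,\theta_{-T}(\sigma);y)\|\le\varepsilon+\psi_{T,\sigma}(x,y)\quad\text{for all }x,y\in B_{\theta_{-T}(\sigma)}.$$ Then $\phi$ is pullback asymptotically compact.
   Context: Let $X$ be a Banach space with norm $\|\cdot\|$. Let $\Sigma$ be a set and $\theta=\{\theta_t\}_{t\in\mathbb{R}}$ a group of bijections $\theta_t:\Sigma\to\Sigma$ with $\theta_0=\mathrm{id}$ and $\theta_{t+\tau}=\theta_t\circ\theta_\tau$. A cocycle with respect to $\theta$ is a map $\phi:\mathbb{R}^+\times\Sigma\times X\to X$ with $\phi(0,\sigma;x)=x$ and $\phi(s+t,\sigma;x)=\phi(s,\theta_t(\sigma);\phi(t,\sigma;x))$ for all $s,t\ge 0$. For $B\subset X$, $\phi(t,\sigma;B)=\{\phi(t,\sigma;x):x\in B\}$. A bounded pullback absorbing set is a family $\{B_\sigma\}_{\sigma\in\Sigma}$ of bounded subsets of $X$ such that for every $\sigma$ and bounded $B\subset X$ there is $T\ge0$ with $\phi(t,\theta_{-t}(\sigma);B)\subset B_\sigma$ for all $t\ge T$.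 For a bounded set $B\subset X$, $\mathrm{Contr}(B)$ denotes the set of functions $\psi:X\times X\to\mathbb{R}$ such that every sequence $\{x_n\}\subset B$ has a subsequence $\{x_{n_k}\}$ with $\lim_{k\to\infty}\lim_{l\to\infty}\psi(x_{n_k},x_{n_l})=0$. $\phi$ is pullback asymptotically compact if for each $\sigma\in\Sigma$, every bounded sequence $\{x_n\}\subset X$ and every $\{t_n\}\subset\mathbb{R}^+$ with $t_n\to+\infty$, the sequence $\{\phi(t_n,\theta_{-t_n}(\sigma);x_n)\}$ is precompact in $X$. *)

(* Defs.v *)
From HB Require Import structures.
From mathcomp Require Import all_boot all_order all_algebra.
From mathcomp Require Import all_classical all_reals all_analysis.
Set Implicit Arguments. Unset Strict Implicit. Unset Printing Implicit Defensive.
Import Order.TTheory GRing.Theory Num.Theory.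
Import numFieldNormedType.Exports.
Local Open Scope classical_set_scope.
Local Open Scope ring_scope.

Definition is_flow (R : realType) (Sigma : Type) (theta : R -> Sigma -> Sigma) :=
  [/\ forall t, bijective (theta t),
      forall s, theta 0 s = s &
      forall t tau s, theta (t + tau) s = theta t (theta tau s)].

(* phi : R^+ x Sigma x X -> X is represented as R -> Sigma -> X -> X; only
   its values at nonnegative times are ever used. *)
Definition is_cocycle (R : realType) (Sigma : Type) (X : Type)
  (theta : R -> Sigma -> Sigma) (phi : R -> Sigma -> X -> X) :=
  (forall s x, phi 0 s x = x) /\
  (forall t tau s x, 0 <= t -> 0 <= tau ->
     phi (t + tau) s x = phi t (theta tau s) (phi tau s x)).

Definition pullback_absorbing (R : realType) (Sigma : Type)
  (X : normedModType R) (theta : R -> Sigma -> Sigma)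
  (phi : R -> Sigma -> X -> X) (B : Sigma -> set X) :=
  (forall s, bounded_set (B s)) /\
  (forall s (D : set X), bounded_set D ->
     exists T, 0 <= T /\
       forall t, T <= t -> phi t (theta (- t) s) @` D `<=` B s).

Definition Contr (R : realType) (X : Type) (B : set X) (psi : X -> X -> R) :=
  forall x : nat -> X, (forall n, B (x n)) ->
    exists (nk : nat -> nat) (L : nat -> R),
      {homo nk : m n / (m < n)%N} /\
      (forall k, (fun l => psi (x (nk k)) (x (nk l))) @ \oo --> L k) /\
      L @ \oo --> (0 : R).

Definition pullback_asymptotically_compact (R : realType) (Sigma : Type)
  (X : normedModType R) (theta : R -> Sigma -> Sigma)
  (phi : R -> Sigma -> X -> X) :=
  forall s (x : nat -> X) (t : nat -> R),
    bounded_set (range x) ->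
    (forall n, 0 <= t n) ->
    t @ \oo --> +oo ->
    precompact (range (fun n => phi (t n) (theta (- t n) s) (x n))).

(* Main.v *)
Require Import Defs.
From HB Require Import structures.
From mathcomp Require Import all_boot all_order all_algebra.
From mathcomp Require Import all_classical all_reals all_analysis.
From mathcomp Require Import ring lra.
Import Order.TTheory GRing.Theory Num.Theory.
Import numFieldNormedType.Exports.
Local Open Scope classical_set_scope.
Local Open Scope ring_scope.

Lemma ultra_seq_ball (R : realType) (X : completeNormedModType R)
  (F : set_system X) (s : seq X) (e : R) : UltraFilter F ->
  F [set y | exists2 c, c \in s & ball c e y] -> exists c, F (ball c e).
Proof.
move=> FU; elim: s => [|c s IH] /= Fs.
  have : F set0 by apply: filterS Fs => y [c].
  by move/filter_ex => [].
have [Fc|Fnc] := in_ultra_setVsetC (ball c e) FU; first by exists c.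
apply: IH; apply: filterS (filterI Fs Fnc) => y [[d]].
rewrite inE => /orP [/eqP -> //|ds] dy _; by exists d.
Qed.

Lemma tb_precompact (R : realType) (X : completeNormedModType R) (A : set X) :
  (forall e, 0 < e -> exists s : seq X,
     forall y, A y -> exists2 c, c \in s & ball c e y) -> precompact A.
Proof.
move=> tb; rewrite precompactE compact_ultra => F FU FA.
have Fc : cauchy_ex F.
  move=> e e0; have e20 : 0 < e / 2 by rewrite divr_gt0.
  have [s hs] := tb _ e20.
  apply: (@ultra_seq_ball R X F s _ FU); apply: filterS FA => y Cy.
  have [a [Aa ya]] := Cy _ (nbhsx_ballx y (e/2) e20).
  have [c cs ca] := hs a Aa.
  exists c => //; have -> : e = e / 2 + e / 2 by rewrite -splitr.
  apply: ball_triangle ca _.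
  exact: ball_sym.
have PF : ProperFilter F by exact: ultra_proper.
have : cvg F by apply: cauchy_cvg; apply/cauchyP.
move=> cF; exists (lim F); split; last exact: cF.
have := @closed_cvg X X F PF id (closure A) (@closed_closure _ A) FA (lim F).
by apply.
Qed.

Lemma arith_aux (R : realType) (a b e : R) : 0 < e -> a < e / 3 -> b <= e / 3 + a -> b < e.
Proof. move=> h0 h1 h2; lra. Qed.

Theorem corollary4p3 (R : realType) (X : completeNormedModType R) (Sigma : Type)
  (theta : R -> Sigma -> Sigma) (phi : R -> Sigma -> X -> X)
  (B : Sigma -> set X) :
  is_flow theta ->
  is_cocycle theta phi ->
  pullback_absorbing theta phi B ->
  (forall (eps : R) (s : Sigma), 0 < eps ->
     exists T : R, 0 <= T /\
     exists psi : X -> X -> R,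
       Contr (B (theta (- T) s)) psi /\
       forall x y, B (theta (- T) s) x -> B (theta (- T) s) y ->
         `|phi T (theta (- T) s) x - phi T (theta (- T) s) y| <= eps + psi x y) ->
  pullback_asymptotically_compact theta phi.
Proof.
move=> [_ th0 thadd] [ph0 phc] [Bb Babs] Hcon s x t bx t0 too.
apply: tb_precompact => e e0.
have eps0 : 0 < e / 3 by rewrite divr_gt0.
have [T [T0 [psi [Cpsi Hpsi]]]] := Hcon (e / 3) s eps0.
set s' := theta (- T) s in Cpsi Hpsi.
have [Ta [Ta0 HTa]] := Babs s' (range x) bx.
have [N _ HN] : \forall n \near \oo, T + Ta <= t n by move/cvgryPge: too; apply.
pose y n := phi (t n) (theta (- t n) s) (x n).
pose z n := phi (t n - T) (theta (- t n) s) (x n).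
have zB : forall n, (N <= n)%N -> B s' (z n).
  move=> n Nn; have hn : T + Ta <= t n by exact: HN.
  have := HTa (t n - T); rewrite /s' -thadd.
  have -> : - (t n - T) + - T = - t n by ring.
  move=> /(_ _ (z n)); apply; first by lra.
  by exists (x n) => //; exists n.
have yz : forall n, (N <= n)%N -> y n = phi T s' (z n).
  move=> n Nn; have hn : T + Ta <= t n by exact: HN.
  rewrite /y {1}(_ : t n = T + (t n - T)); last by ring.
  rewrite phc //; last by lra.
  by rewrite -thadd /s'; congr (phi T (theta _ s) _); ring.
apply: contrapT => Hno.
have Hpick : forall l : seq X, exists n, forall c, c \in l -> ~ ball c e (y n).
  move=> l; apply: contrapT => H; apply: Hno; exists l => _ [n _ <-].
  apply: contrapT => H2; apply: H; exists n => c cl bc; apply: H2; by exists c.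
have [pick Hp] := choice Hpick.
pose L := fix L k := if k is k'.+1 then y (pick (L k')) :: L k'
                     else [seq y i | i <- iota 0 N].
have Lsub : forall j k, (j <= k)%N -> {subset L j <= L k}.
  move=> j k /subnK <-; elim: (k - j)%N => //= m IH w /IH.
  by rewrite inE => ->; rewrite orbT.
have sep : forall j k, (j < k)%N -> ~ ball (y (pick (L j))) e (y (pick (L k))).
  move=> j k jk; apply: Hp; apply: (Lsub j.+1 k jk).
  by rewrite /= inE eqxx.
have geN : forall k, (N <= pick (L k))%N.
  move=> k; rewrite leqNgt; apply/negP => lt.
  apply: (Hp (L k) (y (pick (L k)))); last exact: ballxx.
  apply: (Lsub 0%N k) => //=; apply/mapP; exists (pick (L k)) => //.
  by rewrite mem_iota.
pose w m := z (pick (L m)).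
have [nk [Lk [nkinc [HL HL0]]]] := Cpsi w (fun m => zB _ (geN m)).
have eps20 : 0 < e / 3 / 2 by rewrite divr_gt0.
have [K _ HK] := (cvgrPdist_lt _ _).1 HL0 _ eps20.
have [M _ HM] := (cvgrPdist_lt _ _).1 (HL K) _ eps20.
pose l := maxn M K.+1.
have hk : (K < l)%N by rewrite leq_max leqnn orbT.
have Ml : (M <= l)%N by rewrite leq_max leqnn.
have h1 := HK K (leqnn K).
have h2 := HM l Ml.
have psmall : psi (w (nk K)) (w (nk l)) < e / 3.
  move: h1 h2; rewrite /= sub0r normrN => h1 h2.
  have := ler_norm (psi (w (nk K)) (w (nk l)) - Lk K).
  rewrite distrC in h2; have := ler_norm (Lk K); lra.
apply: (sep (nk K) (nk l) (nkinc K l hk)).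
rewrite -ball_normE /ball_ /= !yz ?geN //.
have := Hpsi _ _ (zB _ (geN (nk K))) (zB _ (geN (nk l))).
rewrite /w in psmall; exact: arith_aux e0 psmall.
Qed.
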